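(* Let $p\ge 1$ and $m\ge 2$ be integers, and let $\mathbf{x}_1,\dots,\mathbf{x}_p\in\mathbb{R}^2$ be given nodes (neighbours of the origin $\mathbf{x}_0=\mathbf{0}$). Let $\varphi_1,\dots,\varphi_n$ be an enumeration of the set $$\Psi=\{x,\ y,\ x^2,\ xy,\ y^2,\ \dots,\ x^m,\ x^{m-1}y,\ \dots,\ y^m\}$$ of all monomials in $(x,y)$ of total degree between $1$ and $m$ (so $n=\binom{m+2}{2}-1$), ordered by nondecreasing degree. For $r>0$ define the $n\times p$ matrix $\Phi(r)$ by $\Phi(r)_{ik}=\varphi_i(r\mathbf{x}_k)$, set $\Phi=\Phi(1)$, and let $\mathbf{Y}=(\Delta\varphi_1(\mathbf{0}),\dots,\Delta\varphi_n(\mathbf{0}))^{\mathrm T}\in\mathbb{R}^n$. Assume $\Phi$ has full column rank $p$ (so that for every $r>0$ the linear system $\mathbf{Y}=\Phi(r)\boldsymbol{\omega}$ has a unique least-squares solution). Let $\boldsymbol{\omega}_r\in\mathbb{R}^p$ be this least-squares solution, i.e. the unique minimizer of $\|\mathbf{Y}-\Phi(r)\boldsymbol{\omega}\|_2$, and put $\boldsymbol{\eta}_r=r^2\boldsymbol{\omega}_r$. Then: 1) $\boldsymbol{\eta}_r$ is bounded as $r\to 0^+$, i.e. there exist $r_0>0$ and $C>0$ such that $\|\boldsymbol{\eta}_r\|\le C$ for all $r\in(0,r_0]$. 2) If $r_n\to 0^+$ and $\boldsymbol{\eta}=\lim_{n\to\infty}\boldsymbol{\eta}_{r_n}$ exists,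 then $\boldsymbol{\eta}$ is an approximation of the Laplacian $\Delta$ at $\mathbf{0}$ of the largest possible order, i.e. the order of $\boldsymbol{\eta}$ equals $\max_{\boldsymbol{\zeta}\in\mathbb{R}^p}\operatorname{ord}(\boldsymbol{\zeta})$.
   Context: Notation: $\Delta=\partial_x^2+\partial_y^2$ is the Laplacian on $\mathbb{R}^2$; thus $\Delta\varphi(\mathbf 0)=2$ for $\varphi\in\{x^2,y^2\}$ and $\Delta\varphi(\mathbf 0)=0$ for every other monomial in $\Psi$. A weight vector $\boldsymbol{\zeta}=(\zeta_1,\dots,\zeta_p)^{\mathrm T}\in\mathbb{R}^p$ defines the discrete Laplace approximation at $\mathbf 0$, $u\mapsto \sum_{k=1}^p \zeta_k\,[u(\mathbf{x}_k)-u(\mathbf 0)]$ (for the scaled nodes $r\mathbf{x}_k$ one uses $u\mapsto r^{-2}\sum_k\zeta_k[u(r\mathbf{x}_k)-u(\mathbf 0)]$). Order of approximation: $\boldsymbol{\zeta}$ is an approximation of $\Delta$ at $\mathbf 0$ of order $l$ ($0\le l\le m$), written $\operatorname{ord}(\boldsymbol{\zeta})=l$, if $l$ is the largest integer in $\{0,\dots,m\}$ such that $\sum_{k=1}^p\zeta_k\,\varphi(\mathbf{x}_k)=\Delta\varphi(\mathbf 0)$ holds for every monomial $\varphi\in\Psi$ of degree $\le l$ (the condition for $l=0$ is vacuous). Equivalently, by homogeneity $\varphi(r\mathbf{x})=r^{\deg\varphi}\varphi(\mathbf{x})$, the scaled operator $r^{-2}\sum_k\zeta_k[\varphi(r\mathbf{x}_k)-\varphi(\mathbf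 0)]$ reproduces $\Delta\varphi(\mathbf 0)$ exactly for all monomials of degree $\le l$, so that for polynomials $u$ the error $\Delta u(\mathbf 0)-r^{-2}\sum_k\zeta_k[u(r\mathbf{x}_k)-u(\mathbf 0)]$ is $O(r^{l-1})$ as $r\to0$. *)

(* Defs.v *)
From HB Require Import structures.
From mathcomp Require Import all_boot all_order all_algebra.
From mathcomp Require Import all_classical all_reals all_analysis.
Set Implicit Arguments. Unset Strict Implicit. Unset Printing Implicit Defensive.
Import Order.TTheory GRing.Theory Num.Theory.
Local Open Scope ring_scope.

(* A monomial x^a y^b is encoded by its exponent pair (a, b). *)
Definition mono_list (m : nat) : seq (nat * nat) :=
  flatten [seq [seq ((d - j)%N, j) | j <- iota 0 d.+1] | d <- iota 1 m].

Definition nmono (m : nat) : nat := size (mono_list m).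

Definition mono (m : nat) (i : 'I_(nmono m)) : nat * nat :=
  nth (0%N, 0%N) (mono_list m) i.

Definition mono_eval {R : ringType} (e : nat * nat) (v : R * R) : R :=
  v.1 ^+ e.1 * v.2 ^+ e.2.

(* Laplacian of x^a y^b at the origin: 2 for x^2 and y^2, 0 otherwise. *)
Definition lap0 {R : ringType} (e : nat * nat) : R :=
  if (e == (2, 0)%N) || (e == (0, 2)%N) then 2 else 0.

Definition Phi {R : ringType} (m p : nat) (xs : 'I_p -> R * R) (r : R)
  : 'M[R]_(nmono m, p) :=
  \matrix_(i < nmono m, k < p) mono_eval (mono i) (r * (xs k).1, r * (xs k).2).

Definition Yvec (R : ringType) (m : nat) : 'cV[R]_(nmono m) :=
  \col_(i < nmono m) lap0 (mono i).

Definition norm2 {R : realType} (n : nat) (v : 'cV[R]_n) : R :=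
  Num.sqrt (\sum_(i < n) v i 0 ^+ 2).

Definition is_lsq {R : realType} (n p : nat) (A : 'M[R]_(n, p))
  (b : 'cV[R]_n) (w : 'cV[R]_p) : Prop :=
  forall w' : 'cV[R]_p, norm2 (b - A *m w) <= norm2 (b - A *m w').

Definition exact_upto {R : realType} (m p : nat) (xs : 'I_p -> R * R)
  (zeta : 'cV[R]_p) (l : nat) : bool :=
  all (fun e : nat * nat => ((e.1 + e.2 <= l)%N) ==>
         ((\sum_(k < p) zeta k 0 * mono_eval e (xs k)) == lap0 e))
      (mono_list m).

(* ord(zeta): the largest l in {0,...,m} with exact_upto zeta l
   (l = 0 always qualifies, the condition being vacuous). *)
Definition ord {R : realType} (m p : nat) (xs : 'I_p -> R * R)
  (zeta : 'cV[R]_p) : nat :=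
  \max_(l < m.+1 | exact_upto m xs zeta l) (l : nat).

(* Main.v *)
Set Warnings "-notation-overridden,-ambiguous-paths,-deprecated,-notation-incompatible-prefix".
Require Import Defs.
From HB Require Import structures.
From mathcomp Require Import all_boot all_order all_algebra.
From mathcomp Require Import all_classical all_reals all_analysis.
From mathcomp Require Import ring lra.
Import Order.TTheory GRing.Theory Num.Theory.
Import numFieldNormedType.Exports.
Local Open Scope classical_set_scope.
Local Open Scope ring_scope.
Lemma incr_ge (f : nat -> nat) : increasing_seq f -> forall j, (j <= f j)%N.
Proof.
move=> /increasing_seqP fi; elim=> [//|j IH].
by apply: leq_ltn_trans IH (fi j).
Qed.

Lemma incr_cvg (f : nat -> nat) : increasing_seq f -> f @ \oo --> \oo.
Proof.
move=> fi A [N _ HA]; exists N => // j /= Nj; apply: HA => /=.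
exact: (leq_trans Nj (incr_ge f fi j)).
Qed.

Lemma incr_comp (f g : nat -> nat) : increasing_seq f -> increasing_seq g ->
  increasing_seq (f \o g).
Proof.
move=> /increasing_seqP fi /increasing_seqP gi; apply/increasing_seqP => n /=.
have: forall a b, (a < b)%N -> (f a < f b)%N.
  move=> a b; elim: b => // b IH; rewrite ltnS leq_eqVlt => /orP[/eqP->|/IH h].
    exact: fi.
  exact: ltn_trans h (fi b).
by apply; exact: gi.
Qed.

Lemma multi_bw (R : realType) p (U : nat -> 'I_p -> R) :
  (forall N k, `|U N k| <= 1) ->
  exists f : nat -> nat, increasing_seq f /\
    forall k, cvgn (fun j => U (f j) k).
Proof.
move=> Ub.
suff H : forall q, (q <= p)%N -> exists f : nat -> nat, increasing_seq f /\
    forall k : 'I_p, (k < q)%N -> cvgn (fun j => U (f j) k).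
  have [f [fi fc]] := H p (leqnn p).
  by exists f; split=> // k; apply: fc.
elim=> [|q IH] qp.
  exists id; split=> // k; by [].
have [f [fi fc]] := IH (ltnW qp).
have bnd : bounded_fun (fun j => U (f j) (Ordinal qp)).
  rewrite /bounded_near; near=> M => x _ /=.
  apply: le_trans (Ub _ _) _; near: M; exact: nbhs_pinfty_ge.
have [g gi gc] := bolzano_weierstrass bnd.
exists (f \o g); split; first exact: incr_comp f g fi gi.
move=> k; rewrite ltnS leq_eqVlt => /orP[/eqP kq|kq].
  have -> : k = Ordinal qp by apply: val_inj.
  exact: gc.
apply/cvg_ex; exists (lim ((fun j => U (f j) k) @ \oo)).
apply: cvg_comp (incr_cvg g gi) (fc k kq).
Unshelve. all: end_near. Qed.

Definition dg (e : nat * nat) : nat := (e.1 + e.2)%N.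
Definition av (R : realType) m p (xs : 'I_p -> R * R) (v : 'cV[R]_p)
  (i : 'I_(nmono m)) : R := \sum_(k < p) v k 0 * mono_eval (mono i) (xs k).
Arguments av {R m p} xs v i.

Lemma mono_eval_scale (R : realType) (e : nat * nat) (r x y : R) :
  mono_eval e (r * x, r * y) = r ^+ dg e * mono_eval e (x, y).
Proof. by rewrite /mono_eval /dg /= !exprMn exprD; ring. Qed.

Lemma Phi_entry (R : realType) m p (xs : 'I_p -> R * R) r i k :
  Phi m xs r i k = r ^+ dg (mono i) * mono_eval (mono i) (xs k).
Proof. by rewrite mxE mono_eval_scale; case: (xs k). Qed.

Lemma lap0_r2 (R : realType) (r : R) e :
  r ^+ 2 * lap0 e = r ^+ dg e * lap0 e.
Proof.
rewrite /lap0 /dg; case: ifP => [/orP[]/eqP->|_] //; by rewrite !mulr0.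
Qed.

Lemma resid (R : realType) m p (xs : 'I_p -> R * R) (r : R) (v : 'cV[R]_p) i :
  r != 0 ->
  r ^+ 2 * (Yvec R m - Phi m xs r *m (r ^-2 *: v)) i 0 =
  r ^+ dg (mono i) * (lap0 (mono i) - av xs v i).
Proof.
move=> r0; rewrite !mxE mulrBr mulrBr lap0_r2; congr (_ - _).
rewrite /av !mulr_sumr; apply: eq_bigr => k _.
rewrite !mxE mono_eval_scale; case: (xs k) => a b /=; field.
by [].
Qed.

Lemma avD (R : realType) m p (xs : 'I_p -> R * R) (v z : 'cV[R]_p) (s : R) (i : 'I_(nmono m)) :
  av xs (v + s *: z) i = av xs v i + s * av xs z i.
Proof.
rewrite /av mulr_sumr -big_split; apply: eq_bigr => k _; by rewrite !mxE mulrDl mulrA.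
Qed.

Lemma quad0 (R : realType) n (e g : 'I_n -> R) :
  (forall s, \sum_i e i ^+ 2 <= \sum_i (e i - s * g i) ^+ 2) ->
  \sum_i e i * g i = 0.
Proof.
move=> H; set c := \sum_i e i * g i; set q := \sum_i g i ^+ 2.
have q0 : 0 <= q by apply: sumr_ge0 => i _; exact: sqr_ge0.
have E s : \sum_i (e i - s * g i) ^+ 2 = \sum_i e i ^+ 2 - 2 * s * c + s ^+ 2 * q.
  transitivity (\sum_i (e i ^+ 2 - (2 * s) * (e i * g i) + s ^+ 2 * g i ^+ 2)).
    by apply: eq_bigr => i _; ring.
  by rewrite big_split sumrB /= -!mulr_sumr.
pose s := c / (q + 1).
have hs : s * (q + 1) = c by rewrite /s mulfVK // lt0r_neq0 // ltr_pwDr.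
have := H s; rewrite E => h.
have h1 : 0 <= - (2 * s * c) + s ^+ 2 * q.
  by move: h; rewrite -subr_ge0 => h; apply: le_trans h _; rewrite le_eqVlt; apply/orP; left; apply/eqP; ring.
rewrite -hs in h1.
have h2 : s ^+ 2 * (q + 2) <= 0 by nra.
have s0 : s = 0.
  apply/eqP; rewrite -sqrf_eq0 eq_le sqr_ge0 andbT.
  by rewrite -(pmulr_lle0 _ (_ : 0 < q + 2)) // ?mulrC //; lra.
by rewrite -hs s0 mul0r.
Qed.

Lemma KC (R : realType) m p (xs : 'I_p -> R * R) (omega : 'cV[R]_p) (r : R) :
  0 < r -> is_lsq (Phi m xs r) (Yvec R m) omega ->
  forall v : 'cV[R]_p,
  \sum_(i < nmono m) (r ^+ dg (mono i) * (lap0 (mono i) - av xs (r ^+ 2 *: omega) i)) ^+ 2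
  <= \sum_(i < nmono m) (r ^+ dg (mono i) * (lap0 (mono i) - av xs v i)) ^+ 2.
Proof.
move=> r0 Hl v; have r0' : r != 0 by rewrite gt_eqF.
have om : omega = r ^-2 *: (r ^+ 2 *: omega).
  by rewrite scalerA mulVf ?scale1r // expf_neq0.
have eq1 w : \sum_(i < nmono m) (r ^+ dg (mono i) * (lap0 (mono i) - av xs w i)) ^+ 2
   = r ^+ 4 * \sum_i ((Yvec R m - Phi m xs r *m (r ^-2 *: w)) i 0) ^+ 2.
  rewrite mulr_sumr; apply: eq_bigr => i _; rewrite -resid //; ring.
rewrite !eq1 -om; apply: ler_wpM2l; first by rewrite exprn_ge0 // ltW.
have := Hl (r ^-2 *: v); rewrite /norm2 ler_sqrt //.
by apply: sumr_ge0 => i _; exact: sqr_ge0.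
Qed.

Lemma KO (R : realType) m p (xs : 'I_p -> R * R) (omega : 'cV[R]_p) (r : R) :
  0 < r -> is_lsq (Phi m xs r) (Yvec R m) omega ->
  forall z : 'cV[R]_p,
  \sum_(i < nmono m) (r ^+ dg (mono i) * (lap0 (mono i) - av xs (r ^+ 2 *: omega) i)) *
         (r ^+ dg (mono i) * av xs z i) = 0.
Proof.
move=> r0 Hl z; apply: quad0 => s.
have := @KC R m p xs omega r r0 Hl (r ^+ 2 *: omega + s *: z).
move=> h; apply: le_trans h _; rewrite le_eqVlt; apply/orP; left; apply/eqP.
by apply/eqP; rewrite eq_sym; apply/eqP; apply: eq_bigr => i _; rewrite avD; congr (_ ^+ 2); ring.
Qed.

Lemma exactE (R : realType) m p (xs : 'I_p -> R * R) (z : 'cV[R]_p) l :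
  exact_upto m xs z l -> forall i : 'I_(nmono m), (dg (mono i) <= l)%N ->
  av xs z i = lap0 (mono i).
Proof.
move/allP => H i hi.
have := H (mono i) (mem_nth _ (ltn_ord i)).
by move=> /implyP /(_ hi) /eqP.
Qed.

Lemma P2bound (R : realType) m p (xs : 'I_p -> R * R) (omega : 'cV[R]_p) (r : R)
  (z : 'cV[R]_p) l (i0 : 'I_(nmono m)) :
  0 < r -> r <= 1 -> is_lsq (Phi m xs r) (Yvec R m) omega ->
  exact_upto m xs z l -> (dg (mono i0) <= l)%N ->
  (lap0 (mono i0) - av xs (r ^+ 2 *: omega) i0) ^+ 2 <=
  r ^+ 2 * \sum_(i < nmono m) (lap0 (mono i) - av xs z i) ^+ 2.
Proof.
move=> r0 r1 Hl ex hi0.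
have h := @KC R m p xs omega r r0 Hl z.
set d0 := dg (mono i0).
have h1 : (r ^+ d0 * (lap0 (mono i0) - av xs (r ^+ 2 *: omega) i0)) ^+ 2 <=
   \sum_(i < nmono m) (r ^+ dg (mono i) * (lap0 (mono i) - av xs (r ^+ 2 *: omega) i)) ^+ 2.
  rewrite (bigD1 i0) //= lerDl; apply: sumr_ge0 => i _; exact: sqr_ge0.
have h2 : \sum_(i < nmono m) (r ^+ dg (mono i) * (lap0 (mono i) - av xs z i)) ^+ 2 <=
   \sum_(i < nmono m) r ^+ (d0.+1 * 2) * (lap0 (mono i) - av xs z i) ^+ 2.
  apply: ler_sum => i _.
  case: (leqP (dg (mono i)) l) => hl.
    rewrite (@exactE R m p xs z l ex i hl) subrr mulr0 expr0n /=.
    rewrite mulr_ge0 // ?exprn_ge0 // ?ltW //; exact: sqr_ge0.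
  rewrite exprMn -exprM; apply: ler_wpM2r; first exact: sqr_ge0.
  apply: ler_wiXn2l; first exact: ltW.
    done.
  by rewrite leq_mul2r /=; apply: leq_ltn_trans hl.
have h3 := le_trans h1 (le_trans h h2).
rewrite -mulr_sumr exprMn -exprM in h3.
have e3 : r ^+ (d0.+1 * 2) = r ^+ (d0 * 2) * r ^+ 2 by rewrite -exprD mulSn addnC.
rewrite e3 -mulrA ler_pM2l in h3 => //.
by rewrite exprn_gt0.
Qed.

Lemma cvg_sumR (R : realType) {T} (F : set_system T) {FF : Filter F} n
  (f : 'I_n -> T -> R) (l : 'I_n -> R) :
  (forall i, f i @ F --> l i) ->
  (fun x => \sum_(i < n) f i x) @ F --> \sum_(i < n) l i.
Proof.
elim: n f l => [|n IH] f l H.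
  under eq_cvg do rewrite big_ord0.
  rewrite big_ord0; exact: cvg_cst.
under eq_cvg do rewrite big_ord_recr.
rewrite big_ord_recr; apply: cvgD; last exact: H.
by apply: (IH (fun i => f (widen_ord (leqnSn n) i))) => i; exact: H.
Qed.
Arguments cvg_sumR {R T F FF n} f l _.

Lemma cvgXn (R : realType) {T} (F : set_system T) {FF : Filter F}
  (f : T -> R) (a : R) k : f @ F --> a -> (fun x => f x ^+ k) @ F --> a ^+ k.
Proof.
move=> H; elim: k => [|k IH].
  under eq_cvg do rewrite expr0.
  rewrite expr0; exact: cvg_cst.
under eq_cvg do rewrite exprS.
rewrite exprS; exact: cvgM.
Qed.
Arguments cvgXn {R T F FF} f a k _.

Lemma cvg_av (R : realType) m p (xs : 'I_p -> R * R) {T} (F : set_system T)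
  {FF : Filter F} (v : T -> 'cV[R]_p) (w : 'cV[R]_p) (i : 'I_(nmono m)) :
  (forall k, (fun x => v x k 0) @ F --> w k 0) ->
  (fun x => av xs (v x) i) @ F --> av xs w i.
Proof.
move=> H; rewrite /av.
apply: (cvg_sumR (fun k x => v x k 0 * mono_eval (mono i) (xs k))) => k.
exact: cvgMr_tmp.
Qed.
Arguments cvg_av {R m p} xs {T F FF} v w i _.

Lemma part2 (R : realType) (p m : nat) (xs : 'I_p -> R * R)
  (omega : R -> 'cV[R]_p) :
  (forall r : R, 0 < r -> is_lsq (Phi m xs r) (Yvec R m) (omega r)) ->
  forall (rs : nat -> R) (etalim : 'cV[R]_p),
     (forall j, 0 < rs j) ->
     rs @ \oo --> 0 ->
     (forall k : 'I_p, (fun j : nat => (((rs j) ^+ 2 *: omega (rs j)) k 0 : R)) @ \oo --> (etalim k 0 : R)) ->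
     forall zeta : 'cV[R]_p, (ord m xs zeta <= ord m xs etalim)%N.
Proof.
move=> Hl rs etal rpos rcvg ecvg zeta.
suff H : forall l, exact_upto m xs zeta l -> exact_upto m xs etal l.
  rewrite /ord; apply/bigmax_leqP => l hl; apply: leq_bigmax_cond; exact: H.
move=> l ex; apply/allP => e he; apply/implyP => hle.
have hidx : (index e (mono_list m) < nmono m)%N by rewrite /nmono index_mem.
pose i0 : 'I_(nmono m) := Ordinal hidx.
have me : mono i0 = e by rewrite /mono nth_index.
rewrite -me; change (av xs etal i0 == lap0 (mono i0)).
set K := \sum_(i < nmono m) (lap0 (mono i) - av xs zeta i) ^+ 2.
have cf : (fun j => (lap0 (mono i0) - av xs (rs j ^+ 2 *: omega (rs j)) i0) ^+ 2)
   @ \oo --> (lap0 (mono i0) - av xs etal i0) ^+ 2.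
  apply: cvgXn; apply: cvgB; first exact: cvg_cst.
  exact: cvg_av.
have cg : (fun j => rs j ^+ 2 * K) @ \oo --> 0 ^+ 2 * K.
  by apply: cvgM; [exact: cvgXn | exact: cvg_cst].
rewrite expr0n /= mul0r in cg.
have hn : \forall j \near \oo,
   (lap0 (mono i0) - av xs (rs j ^+ 2 *: omega (rs j)) i0) ^+ 2 <= rs j ^+ 2 * K.
  have r1 := cvgr_le 0 rcvg 1 ltr01.
  near=> j; apply: (@P2bound R m p xs (omega (rs j)) (rs j) zeta l i0).
  - exact: rpos.
  - near: j; exact: r1.
  - exact: Hl.
  - exact: ex.
  - by rewrite /dg me.
have := ler_cvg_to cf cg hn.
move=> h.
have h0 : (lap0 (mono i0) - av xs etal i0) ^+ 2 == 0 by rewrite eq_le h sqr_ge0.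
by move: h0; rewrite sqrf_eq0 subr_eq0 eq_sym.
Unshelve. all: end_near. Qed.


Lemma avZ (R : realType) m p (xs : 'I_p -> R * R) (v : 'cV[R]_p) (c : R)
  (i : 'I_(nmono m)) : av xs (c *: v) i = c * av xs v i.
Proof.
rewrite /av mulr_sumr; apply: eq_bigr => k _; by rewrite !mxE mulrA.
Qed.

Lemma fullrank (R : realType) m p (xs : 'I_p -> R * R) :
  \rank (Phi m xs 1) = p -> forall z : 'cV[R]_p,
  (forall i : 'I_(nmono m), av xs z i = 0) -> z = 0.
Proof.
move=> Hr z Hz.
have e : Phi m xs 1 *m z = 0.
  apply/matrixP => i j; rewrite [j]ord1 !mxE -[RHS](Hz i) /av.
  apply: eq_bigr => k _; rewrite Phi_entry expr1n mul1r mulrC //.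
have rf : row_free (Phi m xs 1)^T by rewrite /row_free mxrank_tr Hr.
have : z^T *m (Phi m xs 1)^T == 0 by rewrite -trmx_mul e trmx0.
rewrite (mulmx_free_eq0 _ rf) => /eqP h.
by apply: trmx_inj; rewrite h trmx0.
Qed.

Lemma coord_le (R : realType) p (v : 'cV[R]_p) k : `|v k 0| <= norm2 v.
Proof.
rewrite -sqrtr_sqr /norm2 ler_sqrt; last by apply: sumr_ge0 => i _; exact: sqr_ge0.
rewrite (bigD1 k) //= lerDl; apply: sumr_ge0 => i _; exact: sqr_ge0.
Qed.

Lemma norm2_sqr (R : realType) p (v : 'cV[R]_p) :
  norm2 v ^+ 2 = \sum_(k < p) v k 0 ^+ 2.
Proof. by rewrite /norm2 sqr_sqrtr //; apply: sumr_ge0 => i _; exact: sqr_ge0. Qed.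


Lemma part1 (R : realType) (p m : nat) (xs : 'I_p -> R * R)
  (omega : R -> 'cV[R]_p) :
  \rank (Phi m xs 1) = p ->
  (forall r : R, 0 < r -> is_lsq (Phi m xs r) (Yvec R m) (omega r)) ->
  exists r0 : R, exists C : R, 0 < r0 /\ 0 < C /\
     forall r : R, 0 < r -> r <= r0 -> norm2 ((r ^+ 2) *: omega r) <= C.
Proof.
move=> Hr Hl.
apply: contrapT => Hn.
have hN : forall N : nat, exists r : R, [/\ 0 < r, r <= N.+1%:R^-1 &
    N.+1%:R < norm2 (r ^+ 2 *: omega r)].
  move=> N; apply: contrapT => nE; apply: Hn.
  exists N.+1%:R^-1, N.+1%:R; split; first by rewrite invr_gt0 ltr0n.
  split; first by rewrite ltr0n.
  move=> r r0 rle; rewrite leNgt; apply/negP => lt; apply: nE; exists r; by split.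
pose rN N := proj1_sig (cid (hN N)).
have rNP N : [/\ 0 < rN N, rN N <= N.+1%:R^-1 &
    N.+1%:R < norm2 (rN N ^+ 2 *: omega (rN N))] := proj2_sig (cid (hN N)).
pose eta N := rN N ^+ 2 *: omega (rN N).
pose t N := norm2 (eta N).
have tpos N : 0 < t N.
  by have [_ _ h] := rNP N; apply: lt_trans h; rewrite ltr0n.
pose U N k := eta N k 0 / t N.
have Ub : forall N k, `|U N k| <= 1.
  move=> N k; rewrite /U normrM normfV (gtr0_norm (tpos N)) ler_pdivrMr //.
  by rewrite mul1r coord_le.
have [f [fi fc]] := @multi_bw R p U Ub.
pose u : 'cV[R]_p := \col_k lim ((fun j => U (f j) k) @ \oo).
have uc k : (fun j => U (f j) k) @ \oo --> u k 0 by rewrite mxE; exact: fc k.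
have usum : \sum_k (u k 0) ^+ 2 = 1.
  have c1 : (fun j => \sum_k U (f j) k ^+ 2) @ \oo --> \sum_k u k 0 ^+ 2.
    by apply: cvg_sumR => k; exact: cvgXn.
  have e1 N : \sum_k U N k ^+ 2 = 1.
    rewrite /U; under eq_bigr do rewrite expr_div_n.
    rewrite -mulr_suml -norm2_sqr -/(t N) divff //.
    by rewrite expf_neq0 // gt_eqF.
  have c2 : (fun j => \sum_k U (f j) k ^+ 2) @ \oo --> (1 : R).
    under eq_cvg do rewrite e1.
    exact: cvg_cst.
  apply: le_anti; apply/andP; split.
    apply: (ler_cvg_to c1 c2); exact: nearW.
  apply: (ler_cvg_to c2 c1); exact: nearW.
have [i1 hi1] : exists i : 'I_(nmono m), av xs u i != 0.
  apply: contrapT => h.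
  have u0 : u = 0.
    apply: (@fullrank R m p xs Hr) => i; apply/eqP; apply: contrapT => /negP hi.
    by apply: h; exists i.
  move: usum; rewrite u0.
  under eq_bigr do rewrite mxE expr0n /=.
  by rewrite big1 // => /eqP; rewrite eq_sym oner_eq0.
case: (@arg_minnP _ i1 (fun i => av xs u i != 0) (fun i => dg (mono i)) hi1) => i2 hi2 hmin.
set D := dg (mono i2).
have fge := incr_ge f fi.
have rc : (fun j => rN (f j)) @ \oo --> 0.
  apply: (@squeeze_cvgr _ _ _ _ (fun=> 0) harmonic); last exact: cvg_harmonic.
    apply: nearW => j; have [h1 h2 _] := rNP (f j); rewrite ltW //=.
    apply: le_trans h2 _; rewrite /harmonic /= lef_pV2 ?posrE ?ltr0n // ler_nat.
    by rewrite ltnS fge.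
  exact: cvg_cst.
have tc : (fun j => (t (f j))^-1) @ \oo --> 0.
  apply: (@squeeze_cvgr _ _ _ _ (fun=> 0) harmonic); last exact: cvg_harmonic.
    apply: nearW => j; have [_ _ h3] := rNP (f j); rewrite invr_ge0 ltW //=.
    rewrite /harmonic /= lef_pV2 ?posrE ?ltr0n //.
    apply: le_trans (ltW h3); rewrite ler_nat ltnS fge //.
  exact: cvg_cst.
pose E j := \sum_(i < nmono m)
   rN (f j) ^+ (dg (mono i) - D) * rN (f j) ^+ (dg (mono i) - D) *
   (lap0 (mono i) * (t (f j))^-1 - av xs ((t (f j))^-1 *: eta (f j)) i) * av xs u i.
have E0 j : E j = 0.
  have [r0 _ _] := rNP (f j).
  have k := @KO R m p xs (omega (rN (f j))) (rN (f j)) r0 (Hl _ r0) u.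
  have tn : t (f j) != 0 by rewrite gt_eqF.
  have rn : rN (f j) != 0 by rewrite gt_eqF.
  have fn : rN (f j) ^+ D * rN (f j) ^+ D * t (f j) != 0.
    by rewrite !mulf_neq0 // expf_neq0.
  apply: (mulfI fn); rewrite mulr0 -[RHS]k /E mulr_sumr; apply: eq_bigr => i _.
  case: (eqVneq (av xs u i) 0) => [->|nz]; first by rewrite !mulr0.
  have Di := hmin i nz.
  set kk := (dg (mono i) - D)%N.
  have -> : dg (mono i) = (kk + D)%N by rewrite /kk subnK.
  rewrite !avZ exprD /eta; field.
  exact: tn.
pose L := \sum_(i < nmono m)
   (0 : R) ^+ (dg (mono i) - D) * 0 ^+ (dg (mono i) - D) *
   (lap0 (mono i) * 0 - av xs u i) * av xs u i.
have cE : E @ \oo --> L.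
  apply: cvg_sumR => i.
  apply: cvgM; last exact: cvg_cst.
  apply: cvgM; first by apply: cvgM; exact: cvgXn.
  apply: cvgB; first by apply: cvgM; [exact: cvg_cst | exact: tc].
  apply: cvg_av => k.
  under eq_cvg do rewrite mxE mulrC.
  exact: uc k.
have c0 : E @ \oo --> 0.
  under eq_cvg do rewrite E0.
  exact: cvg_cst.
have L0 : L = 0.
  apply: le_anti; apply/andP; split.
    apply: (ler_cvg_to cE c0); exact: nearW.
  apply: (ler_cvg_to c0 cE); exact: nearW.
have eL : L = - \sum_(i < nmono m) (0 ^+ (dg (mono i) - D) * av xs u i) ^+ 2.
  rewrite /L -sumrN; apply: eq_bigr => i _; ring.
have : 0 < \sum_(i < nmono m) ((0 : R) ^+ (dg (mono i) - D) * av xs u i) ^+ 2.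
  rewrite (bigD1 i2) //= subnn expr0 mul1r.
  apply: (@lt_le_trans _ _ (av xs u i2 ^+ 2)).
    by rewrite lt_def sqr_ge0 sqrf_eq0 hi2.
  by rewrite lerDl; apply: sumr_ge0 => i _; exact: sqr_ge0.
by rewrite -oppr_lt0 -eL L0 ltxx.
Qed.


Theorem lemma3p2 (R : realType) (p m : nat) (xs : 'I_p -> R * R)
  (omega : R -> 'cV[R]_p) :
  (1 <= p)%N -> (2 <= m)%N ->
  \rank (Phi m xs 1) = p ->
  (forall r : R, 0 < r -> is_lsq (Phi m xs r) (Yvec R m) (omega r)) ->
  let eta := fun r : R => (r ^+ 2) *: omega r in
  (exists r0 : R, exists C : R, 0 < r0 /\ 0 < C /\
     forall r : R, 0 < r -> r <= r0 -> norm2 (eta r) <= C)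
  /\
  (forall (rs : nat -> R) (etalim : 'cV[R]_p),
     (forall j, 0 < rs j) ->
     rs @ \oo --> 0 ->
     (forall k : 'I_p, (fun j : nat => (eta (rs j) k 0 : R)) @ \oo --> (etalim k 0 : R)) ->
     forall zeta : 'cV[R]_p, (ord m xs zeta <= ord m xs etalim)%N).
Proof.
move=> _ _ Hr Hl eta; split.
  exact: (@part1 R p m xs omega Hr Hl).
move=> rs etal rpos rcvg ecvg zeta.
exact: (@part2 R p m xs omega Hl rs etal rpos rcvg ecvg zeta).
Qed.
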